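(* Let $G$ be a connected weighted multigraph on the vertex set $V$, $|V|=n\ge2$, with positive edge weights and Laplacian matrix $L$, and let $\tilde G$ be any balance-graph of $G$. For $\alpha>0$ let $Q_\alpha=(I+\alpha L)^{-1}=(q_{ij}(\alpha))$ and let $$d^F_\alpha(i,j)=\theta\Bigl(\tfrac12\bigl(\ln q_{ii}(\alpha)+\ln q_{jj}(\alpha)\bigr)-\ln q_{ij}(\alpha)\Bigr),\qquad\theta=\ln\bigl(e+\alpha^{2/n}\bigr)\frac{\alpha-1}{\ln\alpha}$$ ($\theta=\ln(e+1)$ at $\alpha=1$) be the logarithmic forest distance with edge weight transformation $w\mapsto\alpha w$. Then for every $\alpha>0$ and all $i,j\in V$, $d^F_\alpha(i,j)=\tilde d^{W}_\alpha(i,j)$, where $\tilde d^W_\alpha$ is the walk distance of $\tilde G$: with $\tilde A$ the weighted adjacency matrix of $\tilde G$, $\tilde\rho$ its spectral radius, $t=(\tilde\rho+\alpha^{-1})^{-1}$ and $(I-t\tilde A)^{-1}=(r_{ij})$, $\tilde d^W_\alpha(i,j)=\theta\bigl(\tfrac12(\ln r_{ii}+\ln r_{jj})-\ln r_{ij}\bigr)$.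
   Context: Loops and multiple edges are allowed. The weighted adjacency matrix $A=(a_{ij})$ has $a_{ij}$ equal to the sum of weights of the edges joining $i$ and $j$; $L=\operatorname{diag}(A\mathbf 1)-A$. A balance-graph of $G$ is a graph $\tilde G$ with $V(\tilde G)=V$, $E(G)\subseteq E(\tilde G)$, the edges of $E(G)$ keeping their weights, $E(\tilde G)\setminus E(G)$ consisting of loops (with positive weights), and such that the weighted adjacency matrix of $\tilde G$ has constant row sums. *)

(* Defs.v *)
From HB Require Import structures.
From mathcomp Require Import all_boot all_order all_algebra.
From mathcomp Require Import complex.
From mathcomp Require Import reals.
From mathcomp.analysis Require Import sequences exp.
Set Implicit Arguments. Unset Strict Implicit. Unset Printing Implicit Defensive.
Import Order.TTheory GRing.Theory Num.Theory.
Local Open Scope ring_scope.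

(* A weighted multigraph on the vertex set 'I_n is a finite list of edges
   (i, j, w): an edge joining i and j (a loop if i = j) with weight w. *)
Definition wedge (R : Type) (n : nat) := ('I_n * 'I_n * R)%type.

Definition joins n (i j : 'I_n) (a b : 'I_n) :=
  ((a == i) && (b == j)) || ((a == j) && (b == i)).

Definition adjmx (R : realType) n (E : seq (wedge R n)) : 'M[R]_n :=
  \matrix_(i, j) \sum_(e <- E | joins i j e.1.1 e.1.2) e.2.

Definition lapmx (R : realType) n (E : seq (wedge R n)) : 'M[R]_n :=
  diag_mx (\row_i \sum_j adjmx E i j) - adjmx E.

Definition pos_weights (R : realType) n (E : seq (wedge R n)) :=
  all (fun e => 0 < e.2) E.

Definition mg_connected (R : realType) n (E : seq (wedge R n)) :=
  forall i j : 'I_n, connect [rel a b | adjmx E a b != 0] i j.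

Definition balance_graph (R : realType) n (E Et : seq (wedge R n)) :=
  exists2 X : seq (wedge R n), Et = E ++ X &
    all (fun e => (e.1.1 == e.1.2) && (0 < e.2)) X /\
    exists c : R, forall i : 'I_n, \sum_j adjmx Et i j = c.

Definition spectral_radius (R : realType) n (A : 'M[R]_n) (rho : R) :=
  let Ac := map_mx (fun x : R => x%:C%C) A in
  (exists2 l : R[i], eigenvalue Ac l & `|l| = rho%:C%C) /\
  (forall l : R[i], eigenvalue Ac l -> `|l| <= rho%:C%C).

Definition theta (R : realType) (n : nat) (alpha : R) : R :=
  if alpha == 1 then ln (expR 1 + 1)
  else ln (expR 1 + powR alpha (2 / n%:R)) * (alpha - 1) / ln alpha.

Definition logdist (R : realType) n (th : R) (M : 'M[R]_n) (i j : 'I_n) : R :=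
  th * ((ln (M i i) + ln (M j j)) / 2 - ln (M i j)).

Definition forest_dist (R : realType) n (E : seq (wedge R n)) (alpha : R)
    (i j : 'I_n) : R :=
  logdist (theta n alpha) (invmx (1%:M + alpha *: lapmx E)) i j.

Definition walk_dist (R : realType) n (Et : seq (wedge R n)) (rho alpha : R)
    (i j : 'I_n) : R :=
  let t := (rho + alpha^-1)^-1 in
  logdist (theta n alpha) (invmx (1%:M - t *: adjmx Et)) i j.

(* Main.v *)
Require Import Defs.
From HB Require Import structures.
From mathcomp Require Import all_boot all_order all_algebra.
From mathcomp Require Import complex.
From mathcomp Require Import reals.
From mathcomp.analysis Require Import sequences exp.
From mathcomp Require Import ring lra.
Import Order.TTheory GRing.Theory Num.Theory.
Local Open Scope ring_scope.

Section S.
Variables (R : realType) (n : nat).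
Implicit Types (E X : seq (wedge R n)).

Lemma adjmx_sym E i j : adjmx E i j = adjmx E j i.
Proof. by rewrite !mxE; apply: eq_bigl => e; rewrite /joins orbC. Qed.

Lemma adjmx_ge0 E i j : pos_weights E -> 0 <= adjmx E i j.
Proof.
move=> /allP H; rewrite mxE big_seq_cond; apply: sumr_ge0 => e /andP[eE _].
exact: ltW (H e eE).
Qed.

Lemma adjmx_cat E X : adjmx (E ++ X) = adjmx E + adjmx X.
Proof. by apply/matrixP => i j; rewrite !mxE big_cat. Qed.

Lemma adjmx_loops X i j : all (fun e => (e.1.1 == e.1.2) && (0 < e.2)) X ->
  i != j -> adjmx X i j = 0.
Proof.
move=> /allP H nij; rewrite mxE big_seq_cond big1 // => e /andP[eX].
have /andP[/eqP e12 _] := H e eX.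
rewrite /joins e12 => /orP[] /andP[/eqP a /eqP b];
  by move: nij; rewrite -a -b eqxx.
Qed.

Lemma balance_eq E Et c : (exists2 X : seq (wedge R n), Et = E ++ X &
    all (fun e => (e.1.1 == e.1.2) && (0 < e.2)) X) ->
    (forall i : 'I_n, \sum_j adjmx Et i j = c) ->
    adjmx Et = c%:M - lapmx E.
Proof.
move=> [X -> HX] Hc; apply/matrixP => i j.
have HS : \sum_k adjmx E i k + adjmx X i i = c.
  rewrite -(Hc i) adjmx_cat.
  under [RHS]eq_bigr do rewrite mxE.
  rewrite big_split /=; congr (_ + _).
  rewrite (bigD1 i) //= big1 ?addr0 //.
  by move=> k ki; rewrite adjmx_loops // eq_sym.
case: (eqVneq i j) => [<-|nij]; [move: HS | move: (adjmx_loops X i j HX nij)];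
  rewrite /lapmx adjmx_cat; move: (adjmx E) (adjmx X) => A B; rewrite !mxE.
  by rewrite eqxx !mulr1n => <-; ring.
by rewrite (negbTE nij) !mulr0n => ->; ring.
Qed.

Section Min.
Variables (E : seq (wedge R n)) (alpha : R).
Hypothesis (Hpos : pos_weights E) (Ha : 0 < alpha).
Let M := 1%:M + alpha *: lapmx E.

Lemma Mentry (x : 'rV_n) j :
  (x *m M) 0 j = x 0 j + alpha * \sum_i adjmx E j i * (x 0 j - x 0 i).
Proof.
rewrite /M mulmxDr mulmx1 -scalemxAr /lapmx mulmxBr mul_mx_diag !mxE.
congr (_ + alpha * _).
under [RHS]eq_bigr do rewrite mulrBr.
rewrite sumrB mulr_sumr; congr (_ - _).
  by apply: eq_bigr => i _; rewrite mulrC.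
by apply: eq_bigr => i _; rewrite adjmx_sym mulrC.
Qed.

Lemma minprinc (x : 'rV_n) : (forall j, 0 <= (x *m M) 0 j) -> forall j, 0 <= x 0 j.
Proof.
move=> H j.
case: (@arg_minP _ _ _ j xpredT (fun k => x 0 k) isT) => j0 _ Hmin.
apply: le_trans (Hmin j isT).
apply: le_trans (H j0) _; rewrite Mentry gerDl.
rewrite pmulr_rle0 // sumr_le0 // => i _.
rewrite mulr_ge0_le0 ?adjmx_ge0 // subr_le0; exact: Hmin.
Qed.

Lemma M_unit : M \in unitmx.
Proof.
rewrite -row_free_unit -kermx_eq0; apply/eqP/matrixP => k j.
set K := kermx M.
have H0 : row k K *m M = 0 by rewrite -row_mul mulmx_ker row0.
have Hp : forall j, 0 <= (row k K) 0 j.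
  by apply: minprinc => i; rewrite H0 mxE.
have Hn : forall j, 0 <= (- row k K) 0 j.
  by apply: minprinc => i; rewrite mulNmx H0 oppr0 mxE.
have := Hp j; have := Hn j; rewrite !mxE oppr_ge0 => h1 h2.
by apply/eqP; rewrite eq_le h1 h2.
Qed.

Lemma Q_pos (Hc : mg_connected E) k j : 0 < invmx M k j.
Proof.
set Q := invmx M.
have HQ : forall l, (row k Q *m M) 0 l = (k == l)%:R.
  by move=> l; rewrite -row_mul mulVmx ?M_unit // !mxE.
have Hge : forall l, 0 <= Q k l.
  move=> l; have := minprinc (row k Q) _ l; rewrite mxE; apply => i.
  by rewrite HQ ler0n.
have Hz : forall a b, adjmx E a b != 0 -> Q k a = 0 -> Q k b = 0.
  move=> a b Hab Qa.
  have := Mentry (row k Q) a; rewrite HQ !mxE Qa add0r.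
  have : 0 <= (k == a)%:R :> R by rewrite ler0n.
  move=> h1 h2; move: h1; rewrite h2 pmulr_rge0 // => h3.
  have h4 : \sum_i adjmx E a i * Q k i = 0.
    apply/eqP; rewrite eq_le sumr_ge0 ?andbT => [|i _]; last first.
      by rewrite mulr_ge0 ?adjmx_ge0.
    rewrite -oppr_ge0 -sumrN; apply: le_trans h3 _; apply: ler_sum => i _.
    by rewrite !mxE sub0r mulrN.
  have := psumr_eq0P (fun i _ => mulr_ge0 (adjmx_ge0 E a i Hpos) (Hge i)) h4 (i:=b) isT.
  by move/eqP; rewrite mulf_eq0 (negbTE Hab) /= => /eqP.
rewrite lt_def Hge andbT; apply/eqP => Q0.
have Hpath : forall p a, path [rel a b | adjmx E a b != 0] a p ->
    Q k a = 0 -> Q k (last a p) = 0.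
  elim=> [//|b p IH] a /= /andP[Hab Hp] Qa.
  exact: IH Hp (Hz a b Hab Qa).
have /connectP[p Hp Hl] := Hc j k.
have Qk : Q k k = 0 by have := Hpath p j Hp Q0; rewrite -Hl.
have := Mentry (row k Q) k; rewrite HQ eqxx !mxE Qk add0r => h.
have : (1 : R) <= 0.
  rewrite -[1 : R]/(true%:R) h pmulr_rle0 // sumr_le0 // => i _.
  by rewrite sub0r mulrN oppr_le0 mulr_ge0 ?adjmx_ge0 // mxE.
by rewrite ler10.
Qed.

End Min.

Section Eig.
Variables (At : 'M[R]_n) (c : R).
Hypotheses (Hsym : forall i j, At i j = At j i) (Hge : forall i j, 0 <= At i j)
  (Hrow : forall i, \sum_j At i j = c).
Let Ac := map_mx (fun x : R => x%:C%C) At.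

Lemma eig_c (i0 : 'I_n) : eigenvalue Ac (c%:C%C).
Proof.
apply/eigenvalueP; exists (const_mx 1).
  apply/matrixP => i j; rewrite !mxE.
  under eq_bigr do rewrite !mxE mul1r.
  by rewrite -rmorph_sum mulr1 -(Hrow j); congr (_%:C%C); apply: eq_bigr => k _.
apply/eqP => /matrixP /(_ 0 i0); rewrite !mxE => /eqP; by rewrite oner_eq0.
Qed.

Lemma eig_bound l : eigenvalue Ac l -> `|l| <= c%:C%C.
Proof.
move=> /eigenvalueP [v Hv vn0].
have i0 : 'I_n.
  case: n v vn0 {Hv} => [|m] v; last by move=> _; exact: ord0.
  by move=> /eqP []; apply/matrixP => i [].
pose f k := complex.Re `|v 0 k|.
have Hf : forall k, `|v 0 k| = (f k)%:C%C.
  by move=> k; rewrite /f RRe_real // normr_real.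
case: (@arg_maxP _ _ _ i0 xpredT f isT) => j0 _ Hmax.
have Hmax' : forall k, `|v 0 k| <= `|v 0 j0|.
  by move=> k; rewrite !Hf lecR; exact: Hmax.
have vj0 : 0 < `|v 0 j0|.
  rewrite lt_def normr_ge0 andbT normr_eq0; apply/negP => /eqP vz.
  move/negP: vn0; apply; apply/eqP/matrixP => i k; rewrite (ord1 i) mxE.
  apply/eqP; rewrite -normr_eq0 eq_le normr_ge0 andbT.
  by have := Hmax' k; rewrite vz normr0.
have E1 : l * v 0 j0 = \sum_i v 0 i * (At i j0)%:C%C.
  have := congr1 (fun M : 'rV_n => M 0 j0) Hv; rewrite /= !mxE => <-.
  by apply: eq_bigr => i _; rewrite mxE.
rewrite -(ler_pM2r vj0) -normrM E1.
apply: le_trans (ler_norm_sum _ _ _) _.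
apply: (@le_trans _ _ (\sum_i `|v 0 j0| * (At i j0)%:C%C)).
  apply: ler_sum => i _; rewrite normrM (ger0_norm (x := (At i j0)%:C%C)) ?ler0c //.
  by apply: ler_wpM2r; rewrite ?ler0c // Hmax'.
rewrite -mulr_sumr -rmorph_sum mulrC -(Hrow j0).
have -> : \sum_i At i j0 = \sum_j At j0 j by apply: eq_bigr => i _; rewrite Hsym.
by [].
Qed.

End Eig.

End S.

Theorem corollary6 (R : realType) (n : nat) (E Et : seq (wedge R n))
  (rho : R) :
  (2 <= n)%N -> pos_weights E -> mg_connected E ->
  balance_graph E Et -> spectral_radius (adjmx Et) rho ->
  forall alpha : R, 0 < alpha ->
  forall i j : 'I_n, forest_dist E alpha i j = walk_dist Et rho alpha i j.
Proof.
move=> _ Hpos Hcon [X HEt [HX [c Hc]]] [[l Hl Hlrho] Hrho] alpha Ha i j.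
have HposT : pos_weights Et.
  rewrite HEt /pos_weights all_cat; apply/andP; split; first exact: Hpos.
  by apply: sub_all HX => e /andP[].
have Hsym := @adjmx_sym _ _ Et.
have Hge : forall a b, 0 <= adjmx Et a b by move=> a b; exact: (@adjmx_ge0 _ _ Et a b HposT).
have Hbal := @balance_eq _ _ E Et c (ex_intro2 _ _ X HEt HX) Hc.
have c_ge0 : 0 <= c by rewrite -(Hc i) sumr_ge0.
have rhoc : rho = c.
  apply/eqP; rewrite eq_le; apply/andP; split.
    by rewrite -lecR -Hlrho; exact: (@eig_bound _ _ _ c Hsym Hge Hc l Hl).
  have := Hrho _ (@eig_c _ _ _ c Hsym Hc i).
  by rewrite ger0_norm ?ler0c // lecR.
subst rho.
rewrite /forest_dist /walk_dist /logdist /=.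
set t := (c + alpha^-1)^-1.
have cpos : 0 < c + alpha^-1 by rewrite ltr_wpDl // invr_gt0.
have tpos : 0 < t by rewrite /t invr_gt0.
have side : (alpha != 0) && (c * alpha + 1 != 0).
  have h1 : 0 < c * alpha + 1 := ltr_wpDl (mulr_ge0 c_ge0 (ltW Ha)) ltr01.
  by rewrite !gt_eqF.
have Hm : 1%:M - t *: adjmx Et = (t / alpha) *: (1%:M + alpha *: lapmx E).
  rewrite Hbal; apply/matrixP => a b; rewrite !mxE.
  case: (a == b); rewrite ?mulr1n ?mulr0n /t.
    by field.
  by field.
have ka : 0 < t / alpha by rewrite divr_gt0.
have Mu := @M_unit _ _ E alpha Hpos Ha.
rewrite Hm invmxZ; last by rewrite unitmxZ ?unitfE ?gt_eqF.
rewrite !mxE.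
have qp := @Q_pos _ _ E alpha Hpos Ha Hcon.
rewrite !lnM ?posrE ?invr_gt0 ?qp //.
congr (_ * _). move: (ln (t / alpha)^-1) (ln (invmx (1%:M + alpha *: lapmx E) i i)) (ln (invmx (1%:M + alpha *: lapmx E) j j)) (ln (invmx (1%:M + alpha *: lapmx E) i j)) => a b d e; by field.
Qed.
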